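(* The set $T$ is a reduced Gröbner basis of $I_\phi=I_{\phi'}\cap\mathbb{K}[x_{i|A}:i\notin A]$ with respect to the restriction of the graded reverse lexicographic order $<$ to $\mathbb{K}[x_{i|A}:i\notin A]$.
   Context: $\phi:\mathbb{K}[x_{i|A}: i\in[n],A\subseteq[n]\setminus\{i\}]\to\mathbb{K}[y_i,\beta_j]$, $x_{i|A}\mapsto y_i\prod_{j\in A}\beta_j$; $\phi'$ is its extension to all $x_{i|A}$, $A\subseteq[n]$; $I_\phi=\ker\phi$, $I_{\phi'}=\ker\phi'$. $L$ is the lattice on the variables $x_{i|A}$ with $x_{i|A}\le x_{j|B}$ iff $i\le j$ and $A\subseteq B$. $G_L=\{x_{i|A}x_{j|B}-x_{\min(i,j)|A\cap B}x_{\max(i,j)|A\cup B}: x_{i|A},x_{j|B}\text{ incomparable}\}$. $T=T_1\cup T_2$, where $T_1$ is the set of elements of $G_L$ all of whose variables lie in $\mathbb{K}[x_{i|A}:i\notin A]$, and $T_2=\{x_{i|A}x_{j|B}-x_{i|(A\cap B)\cup\{j\}}x_{j|(A\setminus\{j\})\cup B}: i<j,\ i\notin A,\ j\notin B,\ j\in A,\ x_{i|A},x_{j|B}\text{ incomparable in }L\}$. Variables are totally ordered by $x_{i|A}\prec x_{j|B}$ iff $i<j$, or $i=j$ and $|A|<|B|$, or $i=j$, $|A|=|B|$ and $\min(A\setminus B)<\min(B\setminus A)$; indexing them increasingly, $x^u<x^v$ iff $\deg x^u<\deg x^v$, or degrees are equal and the rightmost nonzero entry of $v-u$ is negative. *)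

(* Defs.v *)
From mathcomp Require Import all_boot all_order all_algebra.
From mathcomp Require Import mpoly.
Set Implicit Arguments. Unset Strict Implicit. Unset Printing Implicit Defensive.
Import GRing.Theory.
Local Open Scope ring_scope.

(* Index set [n] is modelled by 'I_n = {0,...,n-1} (order preserved).
   A pair (i, A) : 'I_n * {set 'I_n} indexes the variable x_{i|A}. *)
Definition Idx (n : nat) : finType := ('I_n * {set 'I_n})%type.

Definition nvar (n : nat) : nat := #|Idx n|.

Definition Ring (K : fieldType) (n : nat) := {mpoly K[nvar n]}.

Definition xv (K : fieldType) (n : nat) (w : Idx n) : Ring K n :=
  'X_(enum_rank w).

(* x_{i|A} is a variable of the subring K[x_{i|A} : i notin A]. *)
Definition valid_idx (n : nat) (w : Idx n) : bool := w.1 \notin w.2.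

Definition in_subring (K : fieldType) (n : nat) (p : Ring K n) : Prop :=
  forall m : 'X_{1..nvar n}, m \in msupp p ->
    forall k : 'I_(nvar n), ~~ valid_idx (enum_val k) -> m k = 0%N.

(* Target ring K[y_i, beta_j : i, j in [n]]: y_i = 'X_(lshift n i),
   beta_j = 'X_(rshift n j). *)
Definition phi_img (K : fieldType) (n : nat) (w : Idx n) : {mpoly K[n + n]} :=
  'X_(lshift n w.1) * \prod_(j in w.2) 'X_(rshift n j).

Definition phi' (K : fieldType) (n : nat) (p : Ring K n) : {mpoly K[n + n]} :=
  comp_mpoly [tuple phi_img K (enum_val k) | k < nvar n] p.

Definition I_phi' (K : fieldType) (n : nat) (p : Ring K n) : Prop :=
  phi' p = 0.

Definition I_phi (K : fieldType) (n : nat) (p : Ring K n) : Prop :=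
  in_subring p /\ I_phi' p.

(* x_{i|A} < x_{j|B} iff i<j, or i=j and |A|<|B|, or i=j, |A|=|B| and
   min(A\B) < min(B\A).  (For A<>B with |A|=|B| both differences are
   nonempty.) *)
Definition minset (n : nat) (S : {set 'I_n}) : nat :=
  \big[minn/n]_(j in S) (j : nat).

Definition var_lt (n : nat) (a b : Idx n) : bool :=
  ((a.1 : nat) < b.1)%N
  || ((a.1 == b.1) && (#|a.2| < #|b.2|)%N)
  || [&& a.1 == b.1, #|a.2| == #|b.2|, a.2 != b.2 &
        (minset (a.2 :\: b.2) < minset (b.2 :\: a.2))%N].

(* Graded reverse lexicographic order: x^u < x^v iff deg u < deg v, or the
   degrees are equal and, at the largest variable (w.r.t. var_lt) where u and
   v differ, v has the smaller exponent (the "rightmost nonzero entry of v-u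
   is negative" when variables are indexed increasingly). *)
Definition grevlex_lt (n : nat) (u v : 'X_{1..nvar n}) : bool :=
  (mdeg u < mdeg v)%N
  || ((mdeg u == mdeg v) &&
      [exists k : 'I_(nvar n),
         (v k < u k)%N &&
         [forall l : 'I_(nvar n),
            var_lt (enum_val k) (enum_val l) ==> (u l == v l)]]).

Definition is_lead (K : fieldType) (n : nat) (p : Ring K n)
    (m : 'X_{1..nvar n}) : Prop :=
  m \in msupp p /\
  forall m' : 'X_{1..nvar n}, m' \in msupp p -> m' != m -> grevlex_lt m' m.

Definition groebner_basis (K : fieldType) (n : nat)
    (G I : Ring K n -> Prop) : Prop :=
  (forall g, G g -> I g) /\
  (forall f, I f -> f != 0 ->
     exists g, [/\ G g, g != 0 &
       (exists mg mf, [/\ is_lead g mg, is_lead f mf & (mg <= mf)%MM])]).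

Definition reduced_groebner_basis (K : fieldType) (n : nat)
    (G I : Ring K n -> Prop) : Prop :=
  groebner_basis G I /\
  (forall g, G g -> g != 0 /\ exists mg, is_lead g mg /\ g@_mg = 1) /\
  (forall g g', G g -> G g' -> g' <> g ->
     forall m mg', m \in msupp g -> is_lead g' mg' -> ~ (mg' <= m)%MM).

Definition leL (n : nat) (a b : Idx n) : bool :=
  ((a.1 : nat) <= b.1)%N && (a.2 \subset b.2).

Definition incomparable (n : nat) (a b : Idx n) : bool :=
  ~~ leL a b && ~~ leL b a.

Definition ord_min (n : nat) (i j : 'I_n) : 'I_n :=
  if ((i : nat) <= j)%N then i else j.
Definition ord_max (n : nat) (i j : 'I_n) : 'I_n :=
  if ((i : nat) <= j)%N then j else i.

Definition meetL (n : nat) (a b : Idx n) : Idx n :=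
  (ord_min a.1 b.1, a.2 :&: b.2).
Definition joinL (n : nat) (a b : Idx n) : Idx n :=
  (ord_max a.1 b.1, a.2 :|: b.2).

Definition GL_binom (K : fieldType) (n : nat) (a b : Idx n) : Ring K n :=
  xv K a * xv K b - xv K (meetL a b) * xv K (joinL a b).

Definition T1 (K : fieldType) (n : nat) (p : Ring K n) : Prop :=
  exists a b : Idx n,
    [/\ incomparable a b,
        [&& valid_idx a, valid_idx b, valid_idx (meetL a b)
          & valid_idx (joinL a b)] &
        p = GL_binom K a b].

Definition T2 (K : fieldType) (n : nat) (p : Ring K n) : Prop :=
  exists (i j : 'I_n) (A B : {set 'I_n}),
    [/\ [&& ((i : nat) < j)%N, i \notin A, j \notin B & j \in A],
        incomparable (i, A) (j, B) &
        p = xv K (i, A) * xv K (j, B)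
            - xv K (i, (A :&: B) :|: [set j]) * xv K (j, (A :\ j) :|: B)].

Definition T (K : fieldType) (n : nat) (p : Ring K n) : Prop :=
  (T1 p \/ T2 p) /\ p != 0.

(* Main.v *)
Require Import Defs.
From mathcomp Require Import all_boot all_order all_algebra.
From mathcomp Require Import mpoly.
Set Implicit Arguments. Unset Strict Implicit. Unset Printing Implicit Defensive.

Module PartA.

Section VarOrder.
Variable n : nat.
Implicit Types (A B C S : {set 'I_n}) (a b c : Idx n).

Lemma minset_cases S : Defs.minset S = n \/ exists2 j : 'I_n, j \in S & Defs.minset S = j.
Proof.
rewrite /Defs.minset; apply: (big_ind (fun v => v = n \/ exists2 j : 'I_n, j \in S & v = j)).
- by left.
- move=> x y Hx Hy; rewrite /minn; case: ifP => _; [exact: Hx|exact: Hy].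
- by move=> j Hj; right; exists j.
Qed.

Lemma minset_le S (j : 'I_n) : j \in S -> Defs.minset S <= j.
Proof.
move=> Hj; rewrite /Defs.minset; move: (mem_index_enum j).
elim: (index_enum _) => [|x s IH] //; rewrite inE big_cons.
case/orP => [/eqP <-|/IH H]; first by rewrite Hj geq_minl.
case: ifP => _ //; exact: leq_trans (geq_minr _ _) H.
Qed.

Lemma minset_leT S : Defs.minset S <= n.
Proof. by case: (minset_cases S) => [->|[j _ ->]] //; apply: ltnW. Qed.

Definition lexlt A B := exists r : 'I_n, [/\ r \in A, r \notin B &
   forall y : 'I_n, y < r -> (y \in A) = (y \in B)].

Lemma minset_lexlt A B : Defs.minset (A :\: B) < Defs.minset (B :\: A) <-> lexlt A B.
Proof.
split.
- move=> H; case: (minset_cases (A :\: B)) => [E|[r Hr E]].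
    by move: H; rewrite E ltnNge minset_leT.
  exists r; move: Hr; rewrite inE => /andP [-> ->]; split => // y Hy.
  case Ay: (y \in A); case By: (y \in B) => //.
  + have: y \in A :\: B by rewrite inE Ay By.
    by move/minset_le; rewrite E leqNgt Hy.
  + have: y \in B :\: A by rewrite inE Ay By.
    move/minset_le => H2; move: H; rewrite E => H.
    by have := leq_ltn_trans H2 (ltn_trans Hy H); rewrite ltnn.
- case=> r [rA rB Hy].
  have H1 : Defs.minset (A :\: B) <= r by apply: minset_le; rewrite inE rA rB.
  apply: (leq_ltn_trans H1).
  case: (minset_cases (B :\: A)) => [->|[y]]; first exact: ltn_ord.
  rewrite inE => /andP [yA yB] ->; rewrite ltnNge leq_eqVlt; apply/negP => /orP [/eqP/val_inj E|lt].
    by move: yB; rewrite E (negbTE rB).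
  by move: (Hy _ lt); rewrite yB (negbTE yA).
Qed.

Lemma lexlt_trans A B C : lexlt A B -> lexlt B C -> lexlt A C.
Proof.
case=> p [pA pB Hp]; case=> q [qB qC Hq].
case: (ltngtP p q) => [lt|lt|/val_inj E].
- exists p; split => //.
  + by rewrite -(Hq _ lt).
  + by move=> y Hy; rewrite Hp // Hq // (ltn_trans Hy lt).
- exists q; split => //.
  + by rewrite (Hp _ lt).
  + by move=> y Hy; rewrite Hp ?Hq // (ltn_trans Hy lt).
- by move: qB; rewrite -E (negbTE pB).
Qed.

Lemma lexlt_neq A B : lexlt A B -> A != B.
Proof. by case=> r [rA rB _]; apply/eqP => E; move: rB; rewrite -E rA. Qed.

Lemma lexlt_asym A B : lexlt A B -> lexlt B A -> False.
Proof.
move=> /minset_lexlt H1 /minset_lexlt H2.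
by have := ltn_trans H1 H2; rewrite ltnn.
Qed.

Lemma lexlt_total A B : A != B -> #|A| = #|B| -> lexlt A B \/ lexlt B A.
Proof.
move=> AB cAB.
have nAB : ~~ (A \subset B).
  apply/negP => sAB; move: AB; suff -> : A == B by [].
  by rewrite eqEcard sAB cAB leqnn.
have nBA : ~~ (B \subset A).
  apply/negP => sBA; move: AB; suff -> : A == B by [].
  by rewrite eq_sym eqEcard sBA cAB leqnn.
case: (minset_cases (A :\: B)) => [E|[p pAB Ep]].
  exfalso; move: nAB; rewrite -setD_eq0 => /set0Pn [x Hx].
  by have := minset_le Hx; rewrite E leqNgt ltn_ord.
case: (minset_cases (B :\: A)) => [E|[q qBA Eq]].
  exfalso; move: nBA; rewrite -setD_eq0 => /set0Pn [x Hx].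
  by have := minset_le Hx; rewrite E leqNgt ltn_ord.
case: (ltngtP p q) => [lt|lt|/val_inj E].
- by left; apply/minset_lexlt; rewrite Ep Eq.
- by right; apply/minset_lexlt; rewrite Ep Eq.
- by exfalso; move: pAB qBA; rewrite E !inE => /andP [_ H2] /andP [H3 _]; rewrite H2 in H3.
Qed.

Lemma var_lt_irr a : var_lt a a = false.
Proof. by rewrite /var_lt !ltnn !eqxx. Qed.

Lemma var_ltE a b : var_lt a b <->
  [\/ (a.1 < b.1)%N, (a.1 = b.1 /\ #|a.2| < #|b.2|) |
      [/\ a.1 = b.1, #|a.2| = #|b.2| & lexlt a.2 b.2]].
Proof.
rewrite /var_lt; split.
- case/orP => [/orP [H|/andP [/eqP H1 H2]]|/and4P [/eqP H1 /eqP H2 H3 H4]].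
  + by constructor 1.
  + by constructor 2.
  + by constructor 3; split => //; apply/minset_lexlt.
- case=> [->//|[-> ->]|[-> -> H]]; first by rewrite eqxx orbT.
  rewrite !eqxx (lexlt_neq H) /=; apply/orP; right; exact/minset_lexlt.
Qed.

Lemma var_lt_trans a b c : var_lt a b -> var_lt b c -> var_lt a c.
Proof.
move=> /var_ltE H1 /var_ltE H2; apply/var_ltE.
case: H1 => [H1|[E1 H1]|[E1 F1 H1]]; case: H2 => [H2|[E2 H2]|[E2 F2 H2]].
all: try (by constructor 1; first [apply: (ltn_trans H1 H2) | rewrite ?E1 -?E2 //]).
- by constructor 2; split; [rewrite E1 E2|apply: ltn_trans H1 H2].
- by constructor 2; split; [rewrite E1 E2|rewrite -F2].
- by constructor 2; split; [rewrite E1 E2|rewrite F1].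
- by constructor 3; split; [rewrite E1 E2|rewrite F1 F2|apply: lexlt_trans H1 H2].
Qed.

Lemma var_lt_asym a b : var_lt a b -> var_lt b a -> False.
Proof. by move=> H1 H2; have := var_lt_trans H1 H2; rewrite var_lt_irr. Qed.

Lemma var_lt_total a b : a != b -> var_lt a b \/ var_lt b a.
Proof.
case: a b => [i A] [j B] /= Hne; rewrite /var_lt /=.
case: (ltngtP i j) => [_|_|/val_inj E]; [by left|by right|subst j].
rewrite eqxx /=; case: (ltngtP #|A| #|B|) => [_|_|E]; try (by left); try (by right).
have AB : A != B by apply: contraNneq Hne => ->.
case: (lexlt_total AB E) => /minset_lexlt H.
- by left; rewrite AB H.
- by right; rewrite eq_sym AB H.
Qed.

End VarOrder.

End PartA.
Import PartA.

Module PartB.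

Lemma max_exists (T : eqType) (lt : rel T) :
  (forall x y z, lt x y -> lt y z -> lt x z) ->
  (forall x y, x != y -> lt x y \/ lt y x) ->
  forall s : seq T, s != [::] -> exists2 x, x \in s & forall y, y \in s -> y != x -> lt y x.
Proof.
move=> Htr Htot; elim=> [//|x s IH] _.
case: (eqVneq s [::]) => [->|/IH [z zs Hz]].
  by exists x; rewrite ?inE // => y; rewrite inE => ->.
case: (eqVneq x z) => [E|xz].
  by exists z; rewrite ?inE ?zs ?orbT // => y; rewrite inE => /orP [/eqP->|]; rewrite ?E ?eqxx //; apply: Hz.
case: (Htot _ _ xz) => H.
  exists z; first by rewrite inE zs orbT.
  by move=> y; rewrite inE => /orP [/eqP -> _|]; [exact: H|exact: Hz].
exists x; first by rewrite inE eqxx.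
move=> y; rewrite inE => /orP [/eqP -> |ys yx]; first by rewrite eqxx.
case: (eqVneq y z) => [->//|yz]; exact: Htr (Hz _ ys yz) H.
Qed.

Section Grevlex.
Variable n : nat.
Local Notation N := (nvar n).
Implicit Types (u v w : 'X_{1..N}).

Definition vlt (k l : 'I_N) := var_lt (enum_val k) (enum_val l).

Lemma vlt_irr k : vlt k k = false.
Proof. exact: var_lt_irr. Qed.
Lemma vlt_trans k l m : vlt k l -> vlt l m -> vlt k m.
Proof. exact: var_lt_trans. Qed.
Lemma vlt_asym k l : vlt k l -> vlt l k -> False.
Proof. exact: var_lt_asym. Qed.
Lemma vlt_total k l : k != l -> vlt k l \/ vlt l k.
Proof. by move=> H; apply: var_lt_total; apply: contra H => /eqP /enum_val_inj ->. Qed.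

Lemma grevlexP u v : grevlex_lt u v <->
  (mdeg u < mdeg v \/ (mdeg u = mdeg v /\
     exists k, v k < u k /\ forall l, vlt k l -> u l = v l)).
Proof.
rewrite /grevlex_lt; split.
- case/orP => [H|/andP [/eqP E /existsP [k /andP [H1 /forallP H2]]]]; first by left.
  by right; split => //; exists k; split => // l Hl; apply/eqP; move: (H2 l); move: Hl; rewrite /vlt => ->.
- case=> [->//|[E [k [H1 H2]]]]; apply/orP; right; rewrite E eqxx /=.
  apply/existsP; exists k; rewrite H1 /=; apply/forallP => l; apply/implyP => Hl.
  by rewrite (H2 _ Hl).
Qed.

Lemma grevlex_asym u v : grevlex_lt u v -> grevlex_lt v u -> False.
Proof.
move=> /grevlexP H1 /grevlexP H2.
case: H1 => [H1|[E1 [k1 [Hk1 Hl1]]]]; case: H2 => [H2|[E2 [k2 [Hk2 Hl2]]]].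
- by have := ltn_trans H1 H2; rewrite ltnn.
- by move: H1; rewrite E2 ltnn.
- by move: H2; rewrite E1 ltnn.
case: (eqVneq k1 k2) => [E|ne].
  by subst k2; have := ltn_trans Hk1 Hk2; rewrite ltnn.
case: (vlt_total ne) => H.
  by move: Hk2; rewrite (Hl1 _ H) ltnn.
by move: Hk1; rewrite (Hl2 _ H) ltnn.
Qed.

Lemma grevlex_irr u : grevlex_lt u u = false.
Proof. case H0: (grevlex_lt u u) => //; case: (grevlex_asym H0 H0). Qed.

Lemma grevlex_trans u v w : grevlex_lt u v -> grevlex_lt v w -> grevlex_lt u w.
Proof.
move=> /grevlexP H1 /grevlexP H2; apply/grevlexP.
case: H1 => [H1|[E1 [k1 [Hk1 Hl1]]]]; case: H2 => [H2|[E2 [k2 [Hk2 Hl2]]]].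
- by left; apply: ltn_trans H1 H2.
- by left; rewrite -E2.
- by left; rewrite E1.
right; split; first by rewrite E1 E2.
case: (eqVneq k1 k2) => [E|ne].
  subst k2; exists k1; split; first exact: ltn_trans Hk2 Hk1.
  by move=> l Hl; rewrite Hl1 // Hl2.
case: (vlt_total ne) => H.
- exists k2; split; first by rewrite (Hl1 _ H).
  by move=> l Hl; rewrite Hl1 ?Hl2 //; apply: vlt_trans H Hl.
- exists k1; split; first by rewrite -(Hl2 _ H).
  by move=> l Hl; rewrite Hl1 ?Hl2 //; apply: vlt_trans H Hl.
Qed.

Lemma grevlex_total u v : u != v -> grevlex_lt u v \/ grevlex_lt v u.
Proof.
move=> uv.
case: (ltngtP (mdeg u) (mdeg v)) => [H|H|E].
- by left; apply/grevlexP; left.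
- by right; apply/grevlexP; left.
have : [seq k <- enum 'I_N | u k != v k] != [::].
  apply: contra uv => /eqP H; apply/eqP/mnmP => k.
  apply/eqP; apply: contraT => nk.
  have : k \in [seq k <- enum 'I_N | u k != v k] by rewrite mem_filter nk mem_enum.
  by rewrite H.
case/(max_exists vlt_trans vlt_total) => k; rewrite mem_filter => /andP [nk _] Hk.
have Hl : forall l, vlt k l -> u l = v l.
  move=> l Hl; apply/eqP; apply: contraT => nl.
  have lk : l != k by apply: contraTneq Hl => ->; rewrite vlt_irr.
  have := Hk l; rewrite mem_filter nl mem_enum => /(_ isT lk) H.
  by case: (vlt_asym H Hl).
case: (ltngtP (u k) (v k)) => [H|H|H]; last by rewrite H eqxx in nk.
- by right; apply/grevlexP; right; split => //; exists k; split => // l /Hl.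
- by left; apply/grevlexP; right; split => //; exists k.
Qed.

Lemma grevlex_addr u v w : grevlex_lt u v -> grevlex_lt (u + w)%MM (v + w)%MM.
Proof.
move=> /grevlexP H; apply/grevlexP; rewrite !mdegD.
case: H => [H|[E [k [Hk Hl]]]]; first by left; rewrite ltn_add2r.
right; split; first by rewrite E.
by exists k; rewrite !mnmDE ltn_add2r; split => // l /Hl Hl2; rewrite !mnmDE Hl2.
Qed.

End Grevlex.

End PartB.
Import PartB.

Module PartC.
Import GRing.Theory.
Local Open Scope ring_scope.

Section Binom.
Variable K : fieldType.
Variable n : nat.
Local Notation N := (nvar n).

Definition Lm (a : Idx n) : 'X_{1..N} := U_(enum_rank a)%MM.

Lemma xvE (a : Idx n) : xv K a = 'X_[Lm a].
Proof. by []. Qed.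

Lemma xvM (a b : Idx n) : (xv K a * xv K b = 'X_[Lm a + Lm b])%R.
Proof. by rewrite mpolyXD. Qed.

Lemma LmE (a : Idx n) k : Lm a k = (enum_rank a == k).
Proof. by rewrite /Lm mnm1E. Qed.

Lemma Lm_val (a : Idx n) k : Lm a k = (a == enum_val k).
Proof.
rewrite LmE; congr (nat_of_bool _); apply/idP/idP => /eqP E; apply/eqP; [by rewrite -E enum_rankK|by rewrite E enum_valK].
Qed.

Lemma mdeg_L2 (a b : Idx n) : mdeg (Lm a + Lm b)%MM = 2%N.
Proof. by rewrite mdegD !mdeg1. Qed.

Lemma binom_lead (a b c d : Idx n) :
  var_lt a d -> var_lt b d -> var_lt c d ->
  let p := (xv K a * xv K b - xv K c * xv K d)%R in
  [/\ (Lm a + Lm b != Lm c + Lm d)%MM, p@_(Lm a + Lm b) = 1%R,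
      (forall m, m \in msupp p -> m = (Lm a + Lm b)%MM \/ m = (Lm c + Lm d)%MM),
      is_lead p (Lm a + Lm b)%MM & p != 0%R].
Proof.
move=> ad bd cd p.
have nad : a != d by apply: contraTneq ad => ->; rewrite var_lt_irr.
have nbd : b != d by apply: contraTneq bd => ->; rewrite var_lt_irr.
have ne : (Lm a + Lm b != Lm c + Lm d)%MM.
  apply/negP => /eqP/mnmP/(_ (enum_rank d)).
  rewrite !mnmDE !Lm_val enum_rankK eqxx (negbTE nad) (negbTE nbd) addn1.
  by case: (c == d).
have pE : p = ('X_[Lm a + Lm b] - 'X_[Lm c + Lm d])%R by rewrite /p !xvM.
have coef : p@_(Lm a + Lm b) = 1%R.
  by rewrite pE mcoeffB !mcoeffX eqxx eq_sym (negbTE ne) subr0.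
have supp : forall m, m \in msupp p -> m = (Lm a + Lm b)%MM \/ m = (Lm c + Lm d)%MM.
  move=> m; rewrite mcoeff_msupp pE mcoeffB !mcoeffX.
  case: (eqVneq (Lm a + Lm b)%MM m) => [->|_]; first by left.
  case: (eqVneq (Lm c + Lm d)%MM m) => [->|_]; first by right.
  by rewrite subrr eqxx.
have glt : grevlex_lt (Lm c + Lm d)%MM (Lm a + Lm b)%MM.
  apply/grevlexP; right; rewrite !mdeg_L2; split => //.
  exists (enum_rank d); split.
    by rewrite !mnmDE !Lm_val enum_rankK eqxx (negbTE nad) (negbTE nbd) addn1.
  move=> l; rewrite /vlt enum_rankK => Hl.
  have Hx : forall x, var_lt x d -> Lm x l = 0.
    move=> x xd; rewrite Lm_val; apply/eqP; rewrite eqb0; apply/eqP => E.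
    by subst x; case: (var_lt_asym xd Hl).
  have Hd : Lm d l = 0.
    rewrite Lm_val; apply/eqP; rewrite eqb0; apply/eqP => E.
    by move: Hl; rewrite -E var_lt_irr.
  by rewrite !mnmDE (Hx a) // (Hx b) // (Hx c) // Hd.
have lead : is_lead p (Lm a + Lm b)%MM.
  split; first by rewrite mcoeff_msupp coef oner_neq0.
  by move=> m' /supp [->|->]; rewrite ?eqxx.
split => //.
by apply/eqP => p0; move: coef; rewrite p0 mcoeff0 => /eqP; rewrite eq_sym oner_eq0.
Qed.

End Binom.

End PartC.
Import PartC.

Module PartD.
Import GRing.Theory.
Local Open Scope ring_scope.

Section Phi.
Variable K : fieldType.
Variable n : nat.
Local Notation N := (nvar n).

Definition Eimg (w : Idx n) : 'X_{1..n+n} :=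
  (U_(lshift n w.1) + \sum_(j in w.2) U_(rshift n j))%MM.

Lemma phi_imgE w : phi_img K w = 'X_[Eimg w].
Proof.
rewrite /phi_img /Eimg mpolyXD; congr (_ * _).
by rewrite (big_morph _ (@mpolyXD _ K) (@mpolyX0 _ K)).
Qed.

Lemma phi'_xv w : phi' (xv K w) = 'X_[Eimg w].
Proof.
by rewrite /phi' /xv comp_mpolyXU -tnth_nth tnth_mktuple enum_rankK phi_imgE.
Qed.

Definition img (u : 'X_{1..N}) : 'X_{1..n+n} :=
  (\sum_(k < N) (Eimg (enum_val k) *+ u k))%MM.

Lemma phi'E (p : Ring K n) : phi' p = \sum_(u <- msupp p) p@_u *: 'X_[img u].
Proof.
rewrite /phi' comp_mpolyE; apply: eq_bigr => u _; congr (_ *: _).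
rewrite /img -mprodXnE; apply: eq_bigr => k _.
by rewrite tnth_mktuple phi_imgE.
Qed.

Lemma EimgL w i : Eimg w (lshift n i) = (w.1 == i).
Proof.
rewrite /Eimg mnmDE mnm1E mnm_sumE big1 ?addn0; first by rewrite eq_shift.
by move=> j _; rewrite mnm1E eq_shift.
Qed.

Lemma EimgR w j : Eimg w (rshift n j) = (j \in w.2).
Proof.
rewrite /Eimg mnmDE mnm1E eq_shift add0n mnm_sumE.
case: (boolP (j \in w.2)) => H.
  rewrite (bigD1 j) //= mnm1E eqxx big1 // => k /andP [_ kj].
  by rewrite mnm1E eq_shift (negbTE kj).
by rewrite big1 // => k kA; rewrite mnm1E eq_shift; apply/eqP; rewrite eqb0;
  apply: contraNneq H => <-.
Qed.

Definition cntL (u : 'X_{1..N}) (i : 'I_n) : nat :=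
  (\sum_(k < N) ((enum_val k).1 == i) * u k)%N.
Definition cntG (u : 'X_{1..N}) (j : 'I_n) : nat :=
  (\sum_(k < N) (j \in (enum_val k).2) * u k)%N.

Lemma imgL u i : img u (lshift n i) = cntL u i.
Proof.
rewrite /img mnm_sumE; apply: eq_bigr => k _.
by rewrite mulmnE EimgL mulnC.
Qed.

Lemma imgR u j : img u (rshift n j) = cntG u j.
Proof.
rewrite /img mnm_sumE; apply: eq_bigr => k _.
by rewrite mulmnE EimgR mulnC.
Qed.

Lemma mnm_split (m1 m2 : 'X_{1..n+n}) :
  (forall i, m1 (lshift n i) = m2 (lshift n i)) ->
  (forall j, m1 (rshift n j) = m2 (rshift n j)) -> m1 = m2.
Proof.
move=> HL HR; apply/mnmP => x; case: (splitP x) => [j E|k E].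
  by have -> : x = lshift n j by apply/val_inj.
by have -> : x = rshift n k by apply/val_inj.
Qed.

Lemma pos_sum (b : 'I_N -> bool) (u : 'I_N -> nat) :
  (0 < \sum_(k < N) b k * u k)%N -> exists k, b k /\ (0 < u k)%N.
Proof.
rewrite lt0n sum_nat_eq0 => /forallPn [k]; rewrite /= muln_eq0 negb_or => /andP [H1 H2].
by exists k; rewrite lt0n; split => //; case: (b k) H1.
Qed.

Lemma pos_sum' (b : 'I_N -> bool) (u : 'I_N -> nat) k :
  b k -> (0 < u k)%N -> (0 < \sum_(k < N) b k * u k)%N.
Proof.
move=> bk uk; rewrite (bigD1 k) //= bk mul1n.
exact: leq_trans uk (leq_addr _ _).
Qed.

Lemma cntL_add u v i : cntL (u + v)%MM i = (cntL u i + cntL v i)%N.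
Proof. by rewrite /cntL -big_split; apply: eq_bigr => k _; rewrite mnmDE mulnDr. Qed.
Lemma cntG_add u v i : cntG (u + v)%MM i = (cntG u i + cntG v i)%N.
Proof. by rewrite /cntG -big_split; apply: eq_bigr => k _; rewrite mnmDE mulnDr. Qed.

Lemma mdeg_cntL u : mdeg u = (\sum_(i < n) cntL u i)%N.
Proof.
rewrite mdegE /cntL exchange_big /=; apply: eq_bigr => k _.
rewrite -big_distrl /= (bigD1 (enum_val k).1) //= eqxx big1 ?addn0 ?mul1n //.
by move=> i; rewrite eq_sym => /negbTE ->.
Qed.

End Phi.

End PartD.
Import PartD.

Module PartE.
Import GRing.Theory.
Local Open Scope ring_scope.

Section Struct.
Variable K : fieldType.
Variable n : nat.
Local Notation N := (nvar n).
Implicit Types (a b c d : Idx n).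

Definition goodb a b : bool :=
  ((a.1 < b.1)%N ==> (a.2 :\ b.1 \subset b.2)) &&
  ((a.1 == b.1) ==> (a.2 \subset b.2) || (b.2 \subset a.2)).
Definition pgood a b := goodb a b && goodb b a.

Lemma pgoodC a b : pgood a b = pgood b a.
Proof. by rewrite /pgood andbC. Qed.

Lemma ord_minC (i j : 'I_n) : Defs.ord_min i j = Defs.ord_min j i.
Proof.
rewrite /Defs.ord_min; case: (ltngtP i j) => [lt|lt|/val_inj ->] //.
Qed.
Lemma ord_maxC (i j : 'I_n) : Defs.ord_max i j = Defs.ord_max j i.
Proof.
rewrite /Defs.ord_max; case: (ltngtP i j) => [lt|lt|/val_inj ->] //.
Qed.
Lemma meetLC a b : meetL a b = meetL b a.
Proof. by rewrite /meetL ord_minC setIC. Qed.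
Lemma joinLC a b : joinL a b = joinL b a.
Proof. by rewrite /joinL ord_maxC setUC. Qed.
Lemma incompC a b : incomparable a b = incomparable b a.
Proof. by rewrite /incomparable andbC. Qed.
Lemma GL_binomC a b : GL_binom K a b = GL_binom K b a.
Proof. by rewrite /GL_binom meetLC joinLC mulrC. Qed.

Lemma Eimg_T1 a b : (Eimg a + Eimg b = Eimg (meetL a b) + Eimg (joinL a b))%MM.
Proof.
apply: mnm_split => [i|j]; rewrite [LHS]mnmDE [RHS]mnmDE ?EimgL ?EimgR /=.
- rewrite /Defs.ord_min /Defs.ord_max; case: ifP => _ //=; exact: addnC.
- by rewrite !inE; case: (j \in a.2); case: (j \in b.2).
Qed.

Lemma T1_props a b : incomparable a b ->
  [&& valid_idx a, valid_idx b, valid_idx (meetL a b) & valid_idx (joinL a b)] ->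
  [/\ var_lt a (joinL a b), var_lt b (joinL a b), var_lt (meetL a b) (joinL a b),
      ~~ pgood a b & pgood (meetL a b) (joinL a b)].
Proof.
wlog le_ab : a b / (a.1 <= b.1)%N.
  move=> W Hi Hv; case: (leqP a.1 b.1) => [le|lt]; first exact: W.
  rewrite incompC in Hi.
  have Hv' : [&& valid_idx b, valid_idx a, valid_idx (meetL b a) & valid_idx (joinL b a)].
    by move: Hv; rewrite meetLC joinLC => /and4P [-> -> -> ->].
  case: (W b a (ltnW lt) Hi Hv') => H1 H2 H3 H4 H5.
  by rewrite meetLC joinLC pgoodC; split.
case: a b le_ab => [i A] [j B] /= le_ij.
rewrite /incomparable /leL /= le_ij /= => /andP [nAB nji].
rewrite /valid_idx /meetL /joinL /Defs.ord_min /Defs.ord_max /= le_ij => /and4P [iA jB iAB jAB].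
have pU : B \proper A :|: B by apply: properUr.
case: (ltngtP i j) le_ij => [lt|//|/val_inj E] _.
- split.
  + by apply/var_ltE; constructor 1.
  + by apply/var_ltE; constructor 2; split => //; apply: proper_card.
  + by apply/var_ltE; constructor 1.
  + rewrite /pgood /goodb /= lt /=; apply/nandP; left; apply/nandP; left.
    suff -> : A :\ j = A by [].
    apply/setP => x; rewrite !inE; case: (eqVneq x j) => // ->.
    by move: jAB; rewrite inE negb_or => /andP [/negbTE ->].
  + have ij : (i == j) = false by apply/eqP => E; move: lt; rewrite E ltnn.
    have ji : (j == i) = false by rewrite eq_sym.
    rewrite /pgood /goodb /= lt ij ji /= ltnNge (ltnW lt) /= andbT.
    by rewrite andbT; apply/subsetP => x; rewrite !inE => /andP [_ /andP [-> _]].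
- subst j.
  have nBA : ~~ (B \subset A) by move: nji; rewrite leqnn.
  have pA : A \proper A :|: B by apply: properUl.
  split.
  + by apply/var_ltE; constructor 2; split => //; apply: proper_card.
  + by apply/var_ltE; constructor 2; split => //; apply: proper_card.
  + apply/var_ltE; constructor 2; split => //; apply: proper_card.
    apply: (sub_proper_trans _ pA); exact: subsetIl.
  + by rewrite /pgood /goodb /= ?ltnn eqxx /= (negbTE nAB) (negbTE nBA).
  + by rewrite /pgood /goodb /= ?ltnn eqxx /= (subset_trans (subsetIl _ _) (subsetUl _ _)) orbT.
Qed.

Lemma T2_nz (i j : 'I_n) (A B : {set 'I_n}) :
  j \in A -> j \notin B ->
  xv K (i, A) * xv K (j, B)
    - xv K (i, (A :&: B) :|: [set j]) * xv K (j, (A :\ j) :|: B) != 0 ->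
  ~~ (A :\ j \subset B).
Proof.
move=> jA jB; apply: contra => sub.
have E1 : (A :&: B) :|: [set j] = A.
  apply/setP => x; rewrite !inE; case: (eqVneq x j) => [->|xj]; first by rewrite jA orbT.
  rewrite orbF; apply/andP/idP => [[]//|xA]; split => //.
  by apply: (subsetP sub); rewrite !inE xj.
have E2 : (A :\ j) :|: B = B by apply/setUidPr.
by rewrite E1 E2 subrr.
Qed.

Lemma Eimg_T2 (i j : 'I_n) (A B : {set 'I_n}) : j \in A -> j \notin B ->
  (Eimg (i, A) + Eimg (j, B) =
   Eimg (i, (A :&: B) :|: [set j]) + Eimg (j, (A :\ j) :|: B))%MM.
Proof.
move=> jA jB; apply: mnm_split => [x|x]; rewrite [LHS]mnmDE [RHS]mnmDE ?EimgL ?EimgR //=.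
rewrite !inE; case: (eqVneq x j) => [->|_] /=.
  by rewrite jA (negbTE jB).
by case: (x \in A); case: (x \in B).
Qed.

Lemma T2_props (i j : 'I_n) (A B : {set 'I_n}) :
  (i < j)%N -> i \notin A -> j \notin B -> j \in A -> ~~ (A :\ j \subset B) ->
  let a := (i, A) in let b := (j, B) in
  let c := (i, (A :&: B) :|: [set j]) in let d := (j, (A :\ j) :|: B) in
  [/\ var_lt a d, var_lt b d, var_lt c d, ~~ pgood a b & pgood c d] /\
  [&& valid_idx a, valid_idx b, valid_idx c & valid_idx d].
Proof.
move=> lt iA jB jA nsub a b c d; split; first split.
- by apply/var_ltE; constructor 1.
- by apply/var_ltE; constructor 2; split => //; apply: proper_card; apply: properUr.
- by apply/var_ltE; constructor 1.
- by rewrite /pgood /goodb /= lt /= (negbTE nsub).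
- have ij : (i == j) = false by apply/eqP => E; move: lt; rewrite E ltnn.
  have ji : (j == i) = false by rewrite eq_sym.
  rewrite /pgood /goodb /= lt ij ji /= ltnNge (ltnW lt) /= !andbT.
  apply/subsetP => x; rewrite !inE => /andP [xj /orP [/andP [_ ->]|/eqP xj']].
    by rewrite orbT.
  by move: xj; rewrite xj' eqxx.
- rewrite /valid_idx /a /b /c /d /= iA jB !inE negb_or eqxx /= jB andbT.
  rewrite negb_and (negbTE iA) /=; apply/eqP => E.
  by move: lt; rewrite E ltnn.
Qed.

End Struct.

End PartE.
Import PartE.

Module PartF.
Import GRing.Theory.
Local Open Scope ring_scope.

Section TProps.
Variable K : fieldType.
Variable n : nat.
Local Notation N := (nvar n).
Implicit Types (a b c d : Idx n).

Lemma lead_uniq (p : Ring K n) m1 m2 : is_lead p m1 -> is_lead p m2 -> m1 = m2.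
Proof.
move=> [H1 L1] [H2 L2]; apply/eqP; apply: contraT => ne.
have G1 := L1 _ H2 (negbT (introF eqP (fun e => (elimN eqP ne) (esym e)))).
have G2 := L2 _ H1 ne.
case: (grevlex_asym G1 G2).
Qed.

Lemma Lm_inj a b : Lm a = Lm b -> a = b.
Proof. by move=> /mnmP/(_ (enum_rank a)); rewrite !Lm_val enum_rankK eqxx; case: (eqVneq b a). Qed.

Lemma pair_eq a b c d : (Lm a + Lm b = Lm c + Lm d)%MM ->
  (a = c /\ b = d) \/ (a = d /\ b = c).
Proof.
move=> E; have := congr1 (fun m : 'X_{1..N} => m (enum_rank a)) E.
rewrite /= !mnmDE !Lm_val enum_rankK eqxx.
case: (eqVneq c a) => [ca|ca].
  subst c; move=> _; left; split => //.
  by apply: Lm_inj; apply: (@addmI _ (Lm a)); rewrite E.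
case: (eqVneq d a) => [da|da].
  subst d; move=> _; right; split => //.
  by apply: Lm_inj; apply: (@addmI _ (Lm a)); rewrite E addmC.
by [].
Qed.

Lemma lep_eq (m1 m2 : 'X_{1..N}) : (m1 <= m2)%MM -> mdeg m1 = mdeg m2 -> m1 = m2.
Proof.
move=> le E; rewrite -(submK le).
have : mdeg (m2 - m1)%MM == 0%N.
  by move: (congr1 mdeg (submK le)); rewrite mdegD E -{2}[mdeg m2]add0n => /addIn ->.
by rewrite mdeg_eq0 => /eqP ->; rewrite add0m.
Qed.

Definition valid4 a b c d :=
  [&& valid_idx a, valid_idx b, valid_idx c & valid_idx d].

Lemma binom_Iphi a b c d : valid4 a b c d ->
  var_lt a d -> var_lt b d -> var_lt c d ->
  (Eimg a + Eimg b = Eimg c + Eimg d)%MM ->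
  I_phi (xv K a * xv K b - xv K c * xv K d).
Proof.
move=> /and4P [va vb vc vd] ad bd cd E; split.
- case: (binom_lead K ad bd cd) => _ _ supp _ _.
  move=> m /supp Hm k nk.
  have Z : forall x, valid_idx x -> Lm x k = 0%N.
    move=> x vx; rewrite Lm_val; apply/eqP; rewrite eqb0; apply/eqP => Ex.
    by move: nk; rewrite -Ex vx.
  by case: Hm => ->; rewrite mnmDE !Z.
- rewrite /I_phi' /phi'.
  rewrite rmorphB !rmorphM /=.
  by rewrite -![comp_mpoly _ (xv K _)]/(phi' (xv K _)) !phi'_xv -!mpolyXD E subrr.
Qed.

Lemma T_struct (g : Ring K n) : T g -> exists a b c d,
  [/\ g = xv K a * xv K b - xv K c * xv K d,
      [/\ var_lt a d, var_lt b d & var_lt c d], valid4 a b c d,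
      (Eimg a + Eimg b = Eimg c + Eimg d)%MM &
      ~~ pgood a b /\ pgood c d].
Proof.
case=> [[[a [b [Hi Hv ->]]]|[i [j [A [B [/and4P [lt iA jB jA] Hi ->]]]]]] nz].
- case: (T1_props Hi Hv) => H1 H2 H3 H4 H5.
  exists a, b, (meetL a b), (joinL a b); split => //.
  + exact: Eimg_T1.
- have ns := T2_nz jA jB nz.
  case: (T2_props lt iA jB jA ns) => [[H1 H2 H3 H4 H5] Hv].
  by eexists _, _, _, _; split; [reflexivity| | exact: Hv|exact: Eimg_T2|].
Qed.

Lemma T_lead (g : Ring K n) : T g -> exists a b,
  [/\ is_lead g (Lm a + Lm b)%MM, g@_(Lm a + Lm b) = 1,
      valid_idx a & valid_idx b].
Proof.
case/T_struct => a [b [c [d [-> [ad bd cd] /and4P [va vb _ _] _ _]]]].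
case: (binom_lead K ad bd cd) => _ co _ le _.
by exists a, b; split.
Qed.

Lemma T_Iphi (g : Ring K n) : T g -> I_phi g.
Proof.
case/T_struct => a [b [c [d [-> [ad bd cd] V E _]]]].
exact: binom_Iphi.
Qed.

Lemma T1_lead a b : incomparable a b ->
  [&& valid_idx a, valid_idx b, valid_idx (meetL a b) & valid_idx (joinL a b)] ->
  is_lead (GL_binom K a b) (Lm a + Lm b)%MM.
Proof.
move=> Hi Hv; case: (T1_props Hi Hv) => H1 H2 H3 _ _.
by case: (binom_lead K H1 H2 H3).
Qed.

Lemma T2_lead (i j : 'I_n) (A B : {set 'I_n}) :
  (i < j)%N -> i \notin A -> j \notin B -> j \in A -> ~~ (A :\ j \subset B) ->
  is_lead (xv K (i, A) * xv K (j, B)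
            - xv K (i, (A :&: B) :|: [set j]) * xv K (j, (A :\ j) :|: B))
          (Lm (i, A) + Lm (j, B))%MM.
Proof.
move=> lt iA jB jA ns; case: (T2_props lt iA jB jA ns) => [[H1 H2 H3 _ _] _].
by case: (binom_lead K H1 H2 H3).
Qed.

Lemma T_det (g g' : Ring K n) m : T g -> T g' -> is_lead g m -> is_lead g' m -> g = g'.
Proof.
move=> Tg Tg' Lg Lg'.
case: Tg => [[[a [b [Hi Hv Eg]]]|[i [j [A [B [/and4P [lt iA jB jA] Hi Eg]]]]]] nz];
case: Tg' => [[[a' [b' [Hi' Hv' Eg']]]|[i' [j' [A' [B' [/and4P [lt' iA' jB' jA'] Hi' Eg']]]]]] nz'].
- have := lead_uniq Lg (eq_ind_r (fun x => is_lead x _) (T1_lead Hi Hv) Eg).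
  have := lead_uniq Lg' (eq_ind_r (fun x => is_lead x _) (T1_lead Hi' Hv') Eg').
  move=> -> /pair_eq [[Ea Eb]|[Ea Eb]]; rewrite Eg Eg' Ea Eb //; exact: GL_binomC.
- exfalso.
  have ns := T2_nz jA' jB' (eq_ind _ (fun x => x != 0) nz' _ Eg').
  have := lead_uniq Lg (eq_ind_r (fun x => is_lead x _) (T1_lead Hi Hv) Eg).
  have := lead_uniq Lg' (eq_ind_r (fun x => is_lead x _) (T2_lead lt' iA' jB' jA' ns) Eg').
  move=> -> /pair_eq [[Ea Eb]|[Ea Eb]]; move: Hv; rewrite -Ea -Eb ?(joinLC (j', B'));
    case/and4P => _ _ _ /negP H; apply: H;
    by rewrite /joinL /Defs.ord_max /= (ltnW lt') !inE jA'.
- exfalso.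
  have ns := T2_nz jA jB (eq_ind _ (fun x => x != 0) nz _ Eg).
  have := lead_uniq Lg' (eq_ind_r (fun x => is_lead x _) (T1_lead Hi' Hv') Eg').
  have := lead_uniq Lg (eq_ind_r (fun x => is_lead x _) (T2_lead lt iA jB jA ns) Eg).
  move=> -> /pair_eq [[Ea Eb]|[Ea Eb]]; move: Hv'; rewrite -Ea -Eb ?(joinLC (j, B));
    case/and4P => _ _ _ /negP H; apply: H;
    by rewrite /joinL /Defs.ord_max /= (ltnW lt) !inE jA.
- have ns := T2_nz jA jB (eq_ind _ (fun x => x != 0) nz _ Eg).
  have ns' := T2_nz jA' jB' (eq_ind _ (fun x => x != 0) nz' _ Eg').
  have := lead_uniq Lg (eq_ind_r (fun x => is_lead x _) (T2_lead lt iA jB jA ns) Eg).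
  have := lead_uniq Lg' (eq_ind_r (fun x => is_lead x _) (T2_lead lt' iA' jB' jA' ns') Eg').
  move=> -> /pair_eq [[Ea Eb]|[Ea Eb]]; case: Ea => ? ?; case: Eb => ? ?; subst.
    by [].
  by have := ltn_trans lt lt'; rewrite ltnn.
Qed.

Lemma T_reduced (g g' : Ring K n) : T g -> T g' -> g' <> g ->
  forall m mg', m \in msupp g -> is_lead g' mg' -> ~ (mg' <= m)%MM.
Proof.
move=> Tg Tg' ne m mg' Hm Lg' le.
have Tg2 := Tg; have Tg2' := Tg'.
case/T_struct: Tg2 => a [b [c [d [Eg [ad bd cd] _ _ [_ gcd]]]]].
case/T_struct: Tg2' => a' [b' [c' [d' [Eg' [ad' bd' cd'] _ _ [gab' _]]]]].
case: (binom_lead K ad bd cd) => _ _ supp lead _.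
case: (binom_lead K ad' bd' cd') => _ _ _ lead' _.
rewrite -Eg in supp lead; rewrite -Eg' in lead'.
have E' := lead_uniq Lg' lead'; subst mg'.
case: (supp _ Hm) => Em; subst m.
- have := lep_eq le; rewrite !mdeg_L2 => /(_ erefl) E.
  by apply: ne; apply: (T_det Tg' Tg lead'); rewrite E.
- have := lep_eq le; rewrite !mdeg_L2 => /(_ erefl) /pair_eq [[Ea Eb]|[Ea Eb]].
  + by move: gab'; rewrite Ea Eb gcd.
  + by move: gab'; rewrite Ea Eb pgoodC gcd.
Qed.

End TProps.

End PartF.
Import PartF.

Module PartG.

Section Key.
Variable n : nat.
Local Notation N := (nvar n).
Implicit Types (a b c d x : Idx n) (m u : 'X_{1..N}).

Definition validm m := forall k : 'I_N, ~~ valid_idx (enum_val k) -> m k = 0.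
Definition stdm m := forall a b, 0 < m (enum_rank a) -> 0 < m (enum_rank b) -> goodb a b.

Lemma posL m i : 0 < cntL m i -> exists a, a.1 = i /\ 0 < m (enum_rank a).
Proof.
case/pos_sum => k [/eqP E H]; exists (enum_val k); split => //.
by rewrite enum_valK.
Qed.
Lemma posL' m a : 0 < m (enum_rank a) -> 0 < cntL m a.1.
Proof. by move=> H; apply: (pos_sum' (k := enum_rank a)); rewrite ?enum_rankK. Qed.
Lemma posG m j : 0 < cntG m j -> exists a, j \in a.2 /\ 0 < m (enum_rank a).
Proof.
case/pos_sum => k [E H]; exists (enum_val k); split => //.
by rewrite enum_valK.
Qed.
Lemma posG' m a j : j \in a.2 -> 0 < m (enum_rank a) -> 0 < cntG m j.
Proof. by move=> ja H; apply: (pos_sum' (k := enum_rank a)); rewrite ?enum_rankK. Qed.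

Lemma valid_pos m a : validm m -> 0 < m (enum_rank a) -> valid_idx a.
Proof.
move=> V H; apply: contraT => na.
by move: H; rewrite V ?enum_rankK.
Qed.

Lemma cnt0L i : cntL (0%MM : 'X_{1..N}) i = 0.
Proof. by rewrite /cntL big1 // => k _; rewrite mnm0E muln0. Qed.

Lemma key (d : nat) : forall m u, mdeg m = d -> validm m -> validm u -> stdm m ->
  (forall i, cntL m i = cntL u i) -> (forall j, cntG m j = cntG u j) ->
  m != u -> grevlex_lt m u.
Proof.
elim: d => [|d IH] m u dm Vm Vu Sm EL EG neq.
  move/eqP: dm; rewrite mdeg_eq0 => /eqP m0; subst m.
  exfalso; move/negP: neq; apply; apply/eqP/mnmP => k; rewrite mnm0E.
  apply/esym/eqP; apply: contraT; rewrite -lt0n => uk.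
  have := posL' (a := enum_val k) (m := u); rewrite enum_valK => /(_ uk).
  by rewrite -EL cnt0L.
have [k0 k0pos] : exists k, 0 < m k.
  apply/existsP; apply: contraT; rewrite negb_exists => /forallP H.
  have m0 : m = 0%MM by apply/mnmP => k; rewrite mnm0E; move: (H k); rewrite lt0n negbK => /eqP.
  by move: dm; rewrite m0 mdeg0.
pose P := fun i : 'I_n => 0 < cntL m i.
have P0 : P (enum_val k0).1 by apply: posL'; rewrite enum_valK.
case: (@arg_maxnP _ (enum_val k0).1 P (fun i : 'I_n => (i : nat)) P0) => imax Pimax maxi.
pose S := [set j | 0 < cntG m j] :\ imax.
pose t : Idx n := (imax, S).
have claimA : forall x, valid_idx x -> 0 < cntL m x.1 ->
    (forall j, j \in x.2 -> 0 < cntG m j) -> x = t \/ var_lt x t.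
  move=> [i X] /= vx Px GX.
  have le : i <= imax := maxi i Px.
  rewrite leq_eqVlt in le; case/orP: le => [/eqP /val_inj E|lt]; last first.
    by right; apply/var_ltE; constructor 1.
  subst i.
  have sub : X \subset S.
    apply/subsetP => j jX; rewrite !inE GX // andbT.
    by apply: contraNneq vx => <-.
  case: (eqVneq X S) => [->|ne]; first by left.
  right; apply/var_ltE; constructor 2; split => //; apply: proper_card.
  by rewrite properEneq ne sub.
have claimA' : forall w x, validm w -> (forall i, cntL m i = cntL w i) ->
    (forall j, cntG m j = cntG w j) -> 0 < w (enum_rank x) -> x = t \/ var_lt x t.
  move=> w x Vw ELw EGw H; apply: claimA.
  - exact: valid_pos H.
  - by rewrite ELw; apply: posL'.
  - by move=> j jx; rewrite EGw; apply: posG' jx H.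
have [a1 [a1i a1pos]] := posL Pimax.
pose Q := fun a : Idx n => (a.1 == imax) && (0 < m (enum_rank a)).
have Q1 : Q a1 by rewrite /Q a1i eqxx a1pos.
case: (@arg_maxnP _ a1 Q (fun a : Idx n => #|a.2|) Q1) => amax /andP [/eqP ai apos] maxa.
have va : valid_idx amax := valid_pos Vm apos.
have amaxE : amax = t.
  case: amax ai apos maxa va => i X /= ai apos maxa va; subst i.
  congr (_, _); apply/setP => j; apply/idP/idP.
  - move=> jX; rewrite !inE (@posG' m (imax, X) j jX apos) andbT.
    by apply: contraNneq va => <-.
  - rewrite !inE => /andP [ji /posG [b [jb bpos]]].
    have le : b.1 <= imax := maxi _ (posL' bpos).
    have gb := Sm b (imax, X) bpos apos.
    move: gb; rewrite /goodb /=.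
    rewrite leq_eqVlt in le; case/orP: le => [/eqP /val_inj E|lt].
    + rewrite E ltnn eqxx /= => /orP [/subsetP -> //|sXb].
      have cb : #|b.2| <= #|X|.
        by have := maxa b; rewrite /Q E eqxx bpos /=; apply.
      have : X == b.2 by rewrite eqEcard sXb cb.
      by move/eqP ->.
    + rewrite lt /= => /andP [/subsetP H _]; apply: H.
      by rewrite !inE ji jb.
have tpos : 0 < m (enum_rank t) by rewrite -amaxE.
case: (posnP (u (enum_rank t))) => [ut0|utpos].
-
  apply/grevlexP; right; split.
    by rewrite !mdeg_cntL; apply: eq_bigr => i _.
  exists (enum_rank t); split; first by rewrite ut0.
  move=> l; rewrite /vlt enum_rankK => Hl.
  have Z : forall w, validm w -> (forall i, cntL m i = cntL w i) ->
      (forall j, cntG m j = cntG w j) -> w l = 0.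
    move=> w Vw ELw EGw; apply/eqP; rewrite -leqn0 leqNgt; apply/negP => H.
    have := claimA' w (enum_val l) Vw ELw EGw; rewrite enum_valK => /(_ H).
    case=> [E|H2]; first by move: Hl; rewrite -E var_lt_irr.
    by case: (var_lt_asym H2 Hl).
  by rewrite (Z m) // (Z u).
-
  pose U := U_(enum_rank t)%MM.
  have mE : m = (m - U + U)%MM by rewrite submK // lep1mP -lt0n.
  have uE : u = (u - U + U)%MM by rewrite submK // lep1mP -lt0n.
  rewrite mE uE; apply: grevlex_addr; apply: IH.
  - by move: dm; rewrite {1}mE mdegD mdeg1 addn1 => [[]].
  - by move=> k nk; rewrite mnmBE Vm.
  - by move=> k nk; rewrite mnmBE Vu.
  - move=> a b ha hb; apply: Sm.
    + by apply: leq_trans ha _; rewrite mnmBE leq_subr.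
    + by apply: leq_trans hb _; rewrite mnmBE leq_subr.
  - by move=> i; apply/eqP; rewrite -(eqn_add2r (cntL U i)) -!cntL_add -mE -uE EL.
  - by move=> j; apply/eqP; rewrite -(eqn_add2r (cntG U j)) -!cntG_add -mE -uE EG.
  - by apply: contra neq => /eqP E; rewrite mE uE E.
Qed.

End Key.

End PartG.
Import PartG.

Import GRing.Theory.

Section Main.
Variable K : fieldType.
Variable n : nat.
Local Notation N := (nvar n).
Implicit Types (a b : Idx n).

Lemma lead_nz (g : Ring K n) m : is_lead g m -> g != 0%R.
Proof. by case=> H _; apply/eqP => g0; move: H; rewrite g0 msupp0. Qed.

Lemma goodb_refl a : goodb a a.
Proof. by rewrite /goodb ltnn eqxx subxx. Qed.

Lemma bad_T a b : valid_idx a -> valid_idx b -> ~~ goodb a b ->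
  exists g : Ring K n, T g /\ is_lead g (Lm a + Lm b)%MM.
Proof.
case: a b => [i A] [j B]; rewrite /valid_idx /goodb /= => iA jB.
case: (ltngtP i j) => [lt|gt|/val_inj E].
- have ij : (i == j) = false by apply/eqP => E; move: lt; rewrite E ltnn.
  rewrite ij /= andbT => ns.
  case: (boolP (j \in A)) => jA.
  + have L := T2_lead K lt iA jB jA ns.
    exists (xv K (i, A) * xv K (j, B)
            - xv K (i, (A :&: B) :|: [set j]) * xv K (j, (A :\ j) :|: B))%R.
    split => //; split; last exact: lead_nz L.
    right; exists i, j, A, B; split => //; first by rewrite lt iA jB jA.
    rewrite /incomparable /leL /= (ltnW lt) leqNgt lt /= andbT.
    by apply/negP => /subsetP /(_ _ jA); rewrite (negbTE jB).
  + have AE : A :\ j = A.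
      by apply/setP => x; rewrite !inE; case: (eqVneq x j) => // ->; rewrite (negbTE jA).
    rewrite AE in ns.
    have Hi : incomparable (i, A) (j, B).
      by rewrite /incomparable /leL /= (ltnW lt) leqNgt lt /= ns.
    have Hv : [&& valid_idx (i, A), valid_idx (j, B), valid_idx (meetL (i, A) (j, B))
              & valid_idx (joinL (i, A) (j, B))].
      rewrite /valid_idx /meetL /joinL /Defs.ord_min /Defs.ord_max /= (ltnW lt) iA jB /=.
      by rewrite !inE negb_and negb_or iA jA jB.
    have L := T1_lead K Hi Hv.
    exists (GL_binom K (i, A) (j, B)); split => //; split; last exact: lead_nz L.
    by left; exists (i, A), (j, B); split.
- have ij : (i == j) = false by apply/eqP => E; move: gt; rewrite E ltnn.
  by rewrite ij.
- subst j; rewrite eqxx /= => ns.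
  have Hi : incomparable (i, A) (i, B).
    by rewrite /incomparable /leL /= leqnn /=; move: ns; rewrite negb_or => /andP [-> ->].
  have Hv : [&& valid_idx (i, A), valid_idx (i, B), valid_idx (meetL (i, A) (i, B))
            & valid_idx (joinL (i, A) (i, B))].
    rewrite /valid_idx /meetL /joinL /Defs.ord_min /Defs.ord_max /= leqnn iA jB /=.
    by rewrite !inE negb_and negb_or iA jB.
  have L := T1_lead K Hi Hv.
  exists (GL_binom K (i, A) (i, B)); split => //; split; last exact: lead_nz L.
  by left; exists (i, A), (i, B); split.
Qed.

Lemma groebner_main (f : Ring K n) : I_phi f -> f != 0%R ->
  exists g : Ring K n, [/\ T g, g != 0%R &
    (exists mg mf, [/\ is_lead g mg, is_lead f mf & (mg <= mf)%MM])].
Proof.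
case=> Sf Pf nz.
have ne : msupp f != [::].
  apply: contra nz => /eqP E; apply/eqP; rewrite [f]mpolyE E big_nil //.
case: (max_exists (@grevlex_trans n) (@grevlex_total n) ne) => mf mfin Hmax.
have Lf : is_lead f mf by split.
have Vmf : validm mf := Sf mf mfin.
case: (boolP [forall a : Idx n, forall b : Idx n,
   (0 < mf (enum_rank a)) ==> (0 < mf (enum_rank b)) ==> goodb a b]) => [Hstd|Hbad].
- exfalso.
  have Smf : stdm mf.
    move=> a b ha hb; move/forallP: Hstd => /(_ a) /forallP /(_ b).
    by rewrite ha hb.
  have := congr1 (mcoeff (img mf)) Pf.
  rewrite phi'E mcoeff0 raddf_sum (bigD1_seq mf) ?msupp_uniq //= big1_seq.
    rewrite mcoeffZ mcoeffX eqxx GRing.mulr1 GRing.addr0 => /eqP.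
    by rewrite mcoeff_eq0 mfin.
  move=> u /andP [une uin]; rewrite mcoeffZ mcoeffX.
  case: (eqVneq (img u) (img mf)) => [E|]; last by rewrite GRing.mulr0.
  exfalso.
  have Vu : validm u := Sf u uin.
  have G1 : grevlex_lt mf u.
    apply: (@key n (mdeg mf) mf u erefl Vmf Vu Smf).
    + by move=> i; rewrite -!imgL E.
    + by move=> j; rewrite -!imgR E.
    + by rewrite eq_sym.
  exact: grevlex_asym G1 (Hmax u uin une).
- move/forallPn: Hbad => [a /forallPn [b]]; rewrite !negb_imply => /andP [ha /andP [hb gab]].
  have va := valid_pos Vmf ha; have vb := valid_pos Vmf hb.
  case: (bad_T va vb gab) => g [Tg Lg].
  exists g; split => //; first by case: Tg.
  exists (Lm a + Lm b)%MM, mf; split => //.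
  have ab : a != b by apply: contraNneq gab => ->; rewrite goodb_refl.
  apply/mnm_lepP => k; rewrite mnmDE !Lm_val.
  case: (eqVneq a (enum_val k)) => [Ea|na]; case: (eqVneq b (enum_val k)) => [Eb|nb] //=.
  + by move: ab; rewrite Ea Eb eqxx.
  + by move: ha; rewrite Ea enum_valK.
  + by move: hb; rewrite Eb enum_valK.
Qed.

End Main.

Theorem theorem3p6 (K : fieldType) (n : nat) :
  @reduced_groebner_basis K n (@T K n) (@I_phi K n).
Proof.
split; [split|split].
- by move=> g; apply: T_Iphi.
- exact: groebner_main.
- move=> g Tg; split; first by case: Tg.
  case: (T_lead Tg) => a [b [L c _ _]]; by exists (Lm a + Lm b)%MM.
- move=> g g' Tg Tg' ne m mg' Hm Lg'; exact: (T_reduced Tg Tg' ne Hm Lg').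
Qed.
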